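(* Let $(E,\|\cdot\|)$ be a real Banach space with metric $d(x,y)=\|x-y\|$, $I=[a,b]$ a closed real interval, $E_0=C(I,E)$ the space of continuous functions $I\to E$ with the supremum norm $\|\varphi\|_0=\sup_{t\in I}\|\varphi(t)\|$ and metric $D(\varphi,\xi)=\|\varphi-\xi\|_0$, and fix $c\in I$. Let $\mathcal{K}$ be the set of constant functions in $E_0$. Let $\alpha:E\times E\to[0,\infty)$, $\mathcal{T}:E_0\to E$ and $k\in[0,1)$ satisfy: (1) ($(\alpha,k)$-contractive) $\alpha(\varphi(c),\mathcal{T}\varphi)\,\alpha(\xi(c),\mathcal{T}\xi)\,d(\mathcal{T}\varphi,\mathcal{T}\xi)\le k\,D(\varphi,\xi)$ for all $\varphi,\xi\in E_0$; (2) ($\alpha$-admissible) for all $\varphi,\xi\in E_0$, $\alpha(\varphi(c),\xi(c))\ge1$ implies $\alpha(\mathcal{T}\varphi,\mathcal{T}\xi)\ge1$; (3) ($E_0$-closed) whenever $(\varphi_n)_{n\ge0}$ in $E_0$ and $\varphi\in E_0$ satisfy $\alpha(\varphi_n(c),\mathcal{T}\varphi_n)\ge1$ for all $n$ and $D(\varphi_n,\varphi)\to0$, then $\alpha(\varphi(c),\mathcal{T}\varphi)\ge1$; (4) ($E_0$-starting) there exists $\varphi_0\in E_0$ with $\alpha(\varphi_0(c),\mathcal{T}\varphi_0)\ge1$. Then: (i) there exists $\varphi_0\in\mathcal{K}$ with $\alpha(\varphi_0(c),\mathcal{T}\varphi_0)\ge1$; (ii) for every $\varphi_0\in\mathcal{K}$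 with $\alpha(\varphi_0(c),\mathcal{T}\varphi_0)\ge1$, the sequence $(\varphi_n)_{n\ge0}$ in $\mathcal{K}$ defined by $\varphi_{n+1}(c)=\mathcal{T}\varphi_n$ ($n\ge0$) $D$-converges to some $\varphi^*\in\mathcal{K}$ with $\mathcal{T}\varphi^*=\varphi^*(c)$ and $\alpha(\varphi^*(c),\mathcal{T}\varphi^* )\ge1$; (iii) there is exactly one $\varphi^*\in\mathcal{K}$ with $\mathcal{T}\varphi^*=\varphi^*(c)$ and $\alpha(\varphi^*(c),\mathcal{T}\varphi^* )\ge1$.
   Context: A point $\varphi\in E_0$ with $\mathcal{T}\varphi=\varphi(c)$ is called a PPF dependent fixed point of $\mathcal{T}$. Elements of $\mathcal{K}$ are determined by their value at $c$, so the sequence in (ii) is well defined. *)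

(* Defs.v *)
From HB Require Import structures.
From mathcomp Require Import all_boot all_order all_algebra.
From mathcomp Require Import all_classical all_reals all_analysis.
Set Implicit Arguments. Unset Strict Implicit. Unset Printing Implicit Defensive.
Import Order.TTheory GRing.Theory Num.Theory.
Import numFieldNormedType.Exports.
Local Open Scope classical_set_scope.
Local Open Scope ring_scope.

Definition Itv (R : realType) (a b : R) := {t : R | a <= t <= b}.

Definition cont_on_I (R : realType) (E : normedModType R) (a b : R)
  (f : Itv a b -> E) : Prop :=
  forall t : Itv a b, forall eps : R, 0 < eps ->
    exists2 delta : R, 0 < delta &
      forall s : Itv a b, `|sval s - sval t| < delta -> `|f s - f t| < eps.

Record C0 (R : realType) (E : normedModType R) (a b : R) := MkC0 {
  cfun :> Itv a b -> E;
  cfun_cont : cont_on_I cfun }.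

Definition Dsup (R : realType) (E : normedModType R) (a b : R)
  (phi xi : C0 E a b) : R :=
  sup [set `|phi t - xi t| | t in [set: Itv a b]].

Definition is_const (R : realType) (E : normedModType R) (a b : R)
  (phi : C0 E a b) : Prop :=
  exists x : E, forall t : Itv a b, phi t = x.

(* Main.v *)
Require Import Defs.
From HB Require Import structures.
From mathcomp Require Import all_boot all_order all_algebra.
From mathcomp Require Import all_classical all_reals all_analysis.
From mathcomp Require Import ring lra.
Import Order.TTheory GRing.Theory Num.Theory.
Import numFieldNormedType.Exports.
Local Open Scope classical_set_scope.
Local Open Scope ring_scope.

Lemma geo_dist (R : realType) (E : normedModType R) (u : nat -> E) (q d : R) :
  0 <= q -> q < 1 -> 0 <= d -> (forall n, `|u n.+1 - u n| <= q ^+ n * d) ->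
  forall n m, `|u n - u (n + m)%N| <= (d / (1 - q)) * q ^+ n.
Proof.
move=> q0 q1 d0 f1 n m.
have q1' : 0 < 1 - q by rewrite subr_gt0.
have H : `| u n - u (n + m)%N| <= d * q ^+ n * (1 - q ^+ m) / (1 - q).
  elim: m => [|m ih].
    by rewrite addn0 subrr normr0 expr0 subrr mulr0 mul0r.
  rewrite (le_trans (ler_distD (u (n + m)%N) _ _))//.
  apply: (le_trans (lerD ih _)); first by rewrite distrC addnS; exact: f1.
  rewrite exprD exprS le_eqVlt; apply/orP; left; apply/eqP.
  field; by rewrite lt0r_neq0.
apply: (le_trans H).
rewrite -subr_ge0.
have -> : d / (1 - q) * q ^+ n - d * q ^+ n * (1 - q ^+ m) / (1 - q)
   = d * q ^+ n * q ^+ m / (1 - q) by field; rewrite lt0r_neq0.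
by rewrite divr_ge0 ?mulr_ge0 ?exprn_ge0 // ltW.
Qed.

Lemma geo_cvg (R : realType) (E : completeNormedModType R) (u : nat -> E) (q d : R) :
  0 <= q -> q < 1 -> 0 <= d -> (forall n, `|u n.+1 - u n| <= q ^+ n * d) ->
  cvgn u.
Proof.
move=> q0 q1 d0 f1.
have dist := @geo_dist _ _ u q d q0 q1 d0 f1.
set C := d / (1 - q).
have C_ge0 : 0 <= C by rewrite divr_ge0 // subr_ge0 ltW.
have qn : `|q| < 1 by rewrite ger0_norm.
apply/cauchy_cvgP; apply/cauchy_ballP => _/posnumP[e]; near_simpl.
have lt_min n m : `|u n - u m| <= C * q ^+ minn n m.
  wlog : n m / (n <= m)%N => W.
    by case/orP: (leq_total n m) => /W //; rewrite distrC minnC.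
  by rewrite (minn_idPl _)// (le_trans _ (dist _ (m - n)%N))// subnKC.
case: ltrgt0P C_ge0 => // [Cpos|C0] _; last first.
  near=> n m => /=; rewrite -ball_normE.
  by apply: (le_lt_trans (lt_min _ _)); rewrite C0 mul0r.
near=> n; rewrite -ball_normE /= (le_lt_trans (lt_min n.1 n.2)) //.
rewrite // -ltr_pdivlMl //.
suff : ball 0 (C^-1 * e%:num) (q ^+ minn n.1 n.2).
  by rewrite /ball /= sub0r normrN ger0_norm ?exprn_ge0.
near: n; rewrite nbhs_simpl.
pose g := fun w : nat * nat => q ^+ minn w.1 w.2.
have := @fcvg_ball _ _ (g @ filter_prod \oo \oo) _ 0 _ (C^-1 * e%:num).
move: (@cvg_geometric _ 1 q) => /(_ qn) geo.
near_simpl; apply; last by rewrite mulr_gt0 // invr_gt0.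
apply/cvg_ballP => _/posnumP[delta]; near_simpl.
have [N _ Q] : \forall N \near \oo, ball 0 delta%:num (geometric 1 q N).
  exact: (@fcvg_ball R R _ _ 0 geo).
exists ([set n | N <= n], [set n | N <= n])%N; first by split; exists N.
move=> [n m] [Nn Nm]; rewrite /ball /= sub0r normrN ger0_norm /g ?exprn_ge0 //.
apply: le_lt_trans; last by apply: (Q N) => /=.
rewrite sub0r normrN ger0_norm /geometric //= ?mul1r ?exprn_ge0 //.
by rewrite ler_wiXn2l // ?ltW // leq_min Nn.
Unshelve. all: end_near. Qed.

Section Aux.
Context (R : realType) (E : normedModType R) (a b : R).

Definition cst (x : E) : C0 E a b.
Proof.
refine (@MkC0 R E a b (fun _ => x) _).
move=> t eps e0; exists 1 => // s _; by rewrite subrr normr0.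
Defined.

Lemma cst_c (x : E) (t : Itv a b) : cst x t = x.
Proof. by []. Qed.

Lemma Dsup_const (c : Itv a b) (phi xi : C0 E a b) :
  is_const phi -> is_const xi -> Dsup phi xi = `|phi c - xi c|.
Proof.
move=> [x Hx] [y Hy]; rewrite /Dsup.
have -> : [set `|phi t - xi t| | t in [set: Itv a b]] = [set `|phi c - xi c|].
  apply/seteqP; split => z /=.
    by case=> t _ <-; rewrite !Hx !Hy.
  by move=> ->; exists c.
by rewrite sup1.
Qed.

Lemma const_eq (c : Itv a b) (phi xi : C0 E a b) :
  is_const phi -> is_const xi -> phi c = xi c -> phi = xi.
Proof.
move=> [x Hx] [y Hy] e.
have fe : cfun phi = cfun xi.
  by apply: boolp.funext => t; rewrite Hx Hy -(Hx c) -(Hy c).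
case: phi fe {Hx e} => f fc; case: xi {Hy} => g gc /= fe.
subst g; congr MkC0; exact: Prop_irrelevance.
Qed.

Lemma cst_const (x : E) : is_const (cst x).
Proof. by exists x. Qed.

End Aux.
Arguments Dsup_const {R E a b} c {phi xi}.
Arguments const_eq {R E a b} c {phi xi}.
Arguments cst_c {R E a b}.

Theorem theorem6 (R : realType) (E : completeNormedModType R) (a b : R)
  (c : Itv a b) (alpha : E -> E -> R) (T : C0 E a b -> E) (k : R) :
  (forall x y : E, 0 <= alpha x y) ->
  0 <= k -> k < 1 ->
  (* (1) (alpha,k)-contractive *)
  (forall phi xi : C0 E a b,
     alpha (phi c) (T phi) * alpha (xi c) (T xi) * `|T phi - T xi|
       <= k * Dsup phi xi) ->
  (* (2) alpha-admissible *)
  (forall phi xi : C0 E a b, 1 <= alpha (phi c) (xi c) -> 1 <= alpha (T phi) (T xi)) ->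
  (* (3) E_0-closed *)
  (forall (phin : nat -> C0 E a b) (phi : C0 E a b),
     (forall n, 1 <= alpha (phin n c) (T (phin n))) ->
     (fun n => Dsup (phin n) phi) @ \oo --> 0 ->
     1 <= alpha (phi c) (T phi)) ->
  (* (4) E_0-starting *)
  (exists phi0 : C0 E a b, 1 <= alpha (phi0 c) (T phi0)) ->
  (* (i) *)
  (exists phi0 : C0 E a b, is_const phi0 /\ 1 <= alpha (phi0 c) (T phi0))
  /\
  (* (ii) *)
  (forall phi : nat -> C0 E a b,
     is_const (phi 0%N) -> 1 <= alpha (phi 0%N c) (T (phi 0%N)) ->
     (forall n, is_const (phi n)) ->
     (forall n, phi n.+1 c = T (phi n)) ->
     exists phis : C0 E a b,
       [/\ is_const phis,
           (fun n => Dsup (phi n) phis) @ \oo --> 0,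
           T phis = phis c &
           1 <= alpha (phis c) (T phis)])
  /\
  (* (iii) *)
  (exists phis : C0 E a b,
     [/\ is_const phis, T phis = phis c, 1 <= alpha (phis c) (T phis) &
         forall psi : C0 E a b,
           is_const psi -> T psi = psi c -> 1 <= alpha (psi c) (T psi) ->
           psi = phis]).
Proof.
move=> a0 k0 k1 H1 H2 H3 [phi0 Hphi0].
have contr : forall phi xi : C0 E a b, is_const phi -> is_const xi ->
    1 <= alpha (phi c) (T phi) -> 1 <= alpha (xi c) (T xi) ->
    `|T phi - T xi| <= k * `|phi c - xi c|.
  move=> phi xi cp cx ap ax; rewrite -(Dsup_const c cp cx).
  apply: le_trans (H1 phi xi).
  have h : 1 <= alpha (phi c) (T phi) * alpha (xi c) (T xi).
    by rewrite -[1]mul1r; apply: ler_pM.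
  by rewrite -{1}[`|_|]mul1r ler_wpM2r.
have partI : exists phi1 : C0 E a b, is_const phi1 /\ 1 <= alpha (phi1 c) (T phi1).
  exists (@cst _ _ a b (T phi0)); split; first exact: cst_const.
  by apply: H2.
have partII : forall phi : nat -> C0 E a b,
     is_const (phi 0%N) -> 1 <= alpha (phi 0%N c) (T (phi 0%N)) ->
     (forall n, is_const (phi n)) ->
     (forall n, phi n.+1 c = T (phi n)) ->
     exists phis : C0 E a b,
       [/\ is_const phis,
           (fun n => Dsup (phi n) phis) @ \oo --> 0,
           T phis = phis c &
           1 <= alpha (phis c) (T phis)].
  move=> phi _ A0 Cn Sn.
  have P : forall n, 1 <= alpha (phi n c) (T (phi n)).
    elim=> [//|n IH]; rewrite Sn; apply: H2; by rewrite Sn.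
  pose x n := phi n c.
  have step : forall n, `|x n.+1 - x n| <= k ^+ n * `|x 1%N - x 0%N|.
    elim=> [|n IH]; first by rewrite expr0 mul1r.
    have h := contr _ _ (Cn n.+1) (Cn n) (P _) (P _).
    rewrite /x (Sn n.+1) (Sn n); apply: (le_trans h).
    by rewrite exprS -mulrA ler_wpM2l.
  have cv : cvgn x by exact: (@geo_cvg R E x k _ k0 k1 (normr_ge0 _) step).
  set l := limn x.
  have xl : x n @[n --> \oo] --> l by exact: cv.
  exists (@cst _ _ a b l).
  have Dcv : (fun n => Dsup (phi n) (@cst _ _ a b l)) @ \oo --> 0.
    apply/cvgrPdist_lt => e e0.
    move/cvgrPdist_lt: xl => /(_ e e0); apply: filterS => n /=.
    rewrite (Dsup_const c (Cn n) (cst_const _ _ _ _ _)) sub0r normrN normr_id.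
    by rewrite distrC.
  have Al : 1 <= alpha (@cst _ _ a b l c) (T (@cst _ _ a b l)) by exact: H3 P Dcv.
  split => //; first exact: cst_const.
  have yT : T (phi n) @[n --> \oo] --> T (@cst _ _ a b l).
    apply/cvgrPdist_lt => e e0.
    move/cvgrPdist_lt: xl => /(_ e e0); apply: filterS => n /= h.
    rewrite distrC.
    apply: (le_lt_trans (contr _ _ (Cn n) (cst_const _ _ _ _ _) (P n) Al)).
    apply: (le_lt_trans _ h); rewrite distrC /x cst_c.
    by rewrite -{2}[`|_|]mul1r ler_wpM2r // ltW.
  have yl : T (phi n) @[n --> \oo] --> l.
    have -> : (fun n => T (phi n)) = (fun n => x n.+1) by apply: boolp.funext => n; rewrite /x Sn.
    by rewrite (cvg_shiftS x).
  rewrite cst_c.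
  by rewrite -(cvg_lim _ yT) // -(cvg_lim _ yl).
split => //; split => //.
case: partI => p0 [cp0 ap0].
pose s := fix s n := match n with 0%N => p0 | n'.+1 => @cst _ _ a b (T (s n')) end.
have Cs : forall n, is_const (s n) by case=> [|n] //; exact: cst_const.
have [phis [cs _ fs As]] := partII s cp0 ap0 Cs (fun n => erefl).
exists phis; split => // psi cpsi fpsi apsi.
apply: (const_eq c cpsi cs).
have h := contr _ _ cpsi cs apsi As.
rewrite fpsi fs in h.
have : (1 - k) * `|psi c - phis c| <= 0 by rewrite mulrBl mul1r subr_le0.
rewrite pmulr_rle0 ?subr_gt0 // normr_le0 subr_eq0 => /eqP //.
Qed.
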